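(* Let $K\ge 1$, $N\ge 2$, and let ${\bm{p}}\in\Delta_K$ with $p_1\ge p_2\ge\dots\ge p_K$. For ${\bm{q}}\in\Delta_K$ let $L_N({\bm{p}},{\bm{q}})=\sum_{k=1}^K p_k(1-q_k)^N$ (the expected test loss of the memorization model, where the error on component $k$ is $e_k(n_k)=\mathbf{1}_{\{n_k=0\}}$ and ${\bm{n}}\sim\mathrm{Multinomial}(N,{\bm{q}})$). Then $$L^{\mathrm{same}}({\bm{p}}):=L_N({\bm{p}},{\bm{p}})=\sum_{k=1}^K p_k(1-p_k)^N,$$ $$L^*({\bm{p}}):=\min_{{\bm{q}}\in\Delta_K}L_N({\bm{p}},{\bm{q}})=(K_N({\bm{p}})-1)\,\delta_N({\bm{p}})+\sum_{k=K_N({\bm{p}})+1}^K p_k,$$ for some $\delta_N({\bm{p}})\in\big[p_{K_N({\bm{p}})+1},\,p_{K_N({\bm{p}})}\big)$ (with the convention $p_{K+1}=0$), where $$K_N({\bm{p}}):=\max\left\{s\le K:\ \sum_{k=1}^{s-1}\left(1-(p_s/p_k)^{\frac{1}{N-1}}\right)<1\right\}.$$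
   Context: $\Delta_K=\{{\bm{r}}\in\mathbb{R}^K:{\bm{r}}\ge0,\ \sum_k r_k=1\}$. Memorization model: each of $K$ tasks is memorizing a unique atom; the test distribution is the mixture of the tasks with proportions ${\bm{p}}$, training uses $N$ i.i.d. samples from the mixture with proportions ${\bm{q}}$, and the error on task $k$ is $1$ if no training example from task $k$ was seen and $0$ otherwise. *)

(* Defs.v *)
From mathcomp Require Import all_boot all_order all_algebra.
From mathcomp Require Import all_classical all_reals all_analysis.
Set Implicit Arguments. Unset Strict Implicit. Unset Printing Implicit Defensive.
Import Order.TTheory GRing.Theory Num.Theory.
Local Open Scope ring_scope.

(* The probability simplex Delta_K, vectors indexed by 'I_K (index k-1). *)
Definition in_simplex (R : realType) (K : nat) (q : 'I_K -> R) : Prop :=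
  (forall k, 0 <= q k) /\ \sum_(k < K) q k = 1.

(* 1-based access p_k for k = 1..K, with the convention p_k = 0 otherwise
   (in particular p_{K+1} = 0). *)
Definition pn (R : realType) (K : nat) (p : 'I_K -> R) (k : nat) : R :=
  match k with
  | 0 => 0
  | k'.+1 => if @insub nat (fun i => (i < K)%N) 'I_K k' is Some i then p i else 0
  end.

Definition LN (R : realType) (K N : nat) (p q : 'I_K -> R) : R :=
  \sum_(k < K) p k * (1 - q k) ^+ N.

Definition KN_cond (R : realType) (K N : nat) (p : 'I_K -> R) (s : nat) : bool :=
  \sum_(1 <= k < s) (1 - powR (pn p s / pn p k) (1 / (N - 1)%:R)) < 1.

Definition KN (R : realType) (K N : nat) (p : 'I_K -> R) : nat :=
  \max_(1 <= s < K.+1 | KN_cond N p s) s.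

(* Main.v *)
Require Import Defs.
From mathcomp Require Import all_boot all_order all_algebra.
From mathcomp Require Import all_classical all_reals all_analysis.
From mathcomp Require Import ring lra zify.
Import Order.TTheory GRing.Theory Num.Theory.
Local Open Scope ring_scope.

Lemma tangent (R : realType) (n : nat) (a b : R) : 0 <= a -> 0 <= b ->
  b ^+ n.+1 + n.+1%:R * b ^+ n * (a - b) <= a ^+ n.+1.
Proof.
move=> a0 b0; elim: n => [|n IH]; first by rewrite expr0 !expr1 mulr1 mul1r; lra.
have x0 : 0 <= b ^+ n by rewrite exprn_ge0.
move: IH x0; rewrite [b ^+ n.+2]exprS [b ^+ n.+1]exprS [a ^+ n.+2]exprS.
set x := b ^+ n; set y := a ^+ n.+1.
rewrite -[n.+2%:R]natr1; set m := n.+1%:R.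
have m0 : 0 <= m by rewrite ler0n.
move=> IH x0.
have h := mulr_ge0 (mulr_ge0 m0 x0) (sqr_ge0 (a - b)); rewrite expr2 in h.
have := ler_wpM2l a0 IH.
nra.
Qed.

Lemma pnS (R : realType) (K : nat) (f : 'I_K -> R) (i : 'I_K) : pn f i.+1 = f i.
Proof. rewrite /= insubT //= => h; congr f; exact: val_inj. Qed.

Lemma pn_out (R : realType) (K : nat) (f : 'I_K -> R) k : (K < k)%N -> pn f k = 0.
Proof. case: k => //= k Hk; by rewrite insubN // -ltnNge. Qed.

Lemma sum_ordS (R : realType) (K : nat) (H : nat -> R) :
  \sum_(i < K) H (val i).+1 = \sum_(1 <= k < K.+1) H k.
Proof. by rewrite big_add1 /= big_mkord. Qed.

Lemma KN_spec (R : realType) (K N : nat) (p : 'I_K -> R) : (1 <= K)%N ->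
  [/\ (1 <= KN N p <= K)%N, KN_cond N p (KN N p) &
      forall s, (KN N p < s <= K)%N -> ~~ KN_cond N p s].
Proof.
move=> K1.
have c1 : KN_cond N p 1 by rewrite /KN_cond big_geq // ltr01.
have ge1 : (1 <= KN N p)%N.
  by apply: (leq_bigmax_seq 1%N) => //; rewrite mem_index_iota /= ltnS.
have : (KN N p == 0%N) || (KN_cond N p (KN N p) && (1 <= KN N p <= K)%N).
  rewrite /KN big_seq_cond; apply: (big_ind (fun x => (x == 0%N) || (KN_cond N p x && (1 <= x <= K)%N))).
  - by rewrite eqxx.
  - move=> x y hx hy; rewrite /maxn; by case: ltnP.
  - move=> s /andP[]; rewrite mem_index_iota => /andP[s1 sK] cs; by rewrite cs s1 -ltnS sK orbT.
case/orP => [/eqP h|/andP[cS /andP[_ SK]]]; first by rewrite h in ge1.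
split => //; first by rewrite ge1 SK.
move=> s /andP[Ss sK]; apply/negP => cs.
have : (s <= KN N p)%N by apply: (leq_bigmax_seq s) => //; rewrite mem_index_iota ltnS sK (leq_trans ge1 (ltnW Ss)).
by rewrite leqNgt Ss.
Qed.

Lemma core (R : realType) (K N S : nat) (P : nat -> R) :
 let r := 1 / (N - 1)%:R in
 (2 <= N)%N -> (1 <= S <= K)%N ->
 (forall k, 0 <= P k) ->
 (forall j k, (1 <= j <= k)%N -> P k <= P j) ->
 0 < P 1%N ->
 \sum_(1 <= k < S) (1 - powR (P S / P k) r) < 1 ->
 ((S < K)%N -> ~ (\sum_(1 <= k < S.+1) (1 - powR (P S.+1 / P k) r) < 1)) ->
 (forall k, (K < k)%N -> P k = 0) ->
 exists delta, P S.+1 <= delta /\ delta < P S /\ exists X : nat -> R,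
   (forall k, 0 <= X k) /\ \sum_(1 <= k < K.+1) X k = 1 /\
   \sum_(1 <= k < K.+1) P k * (1 - X k) ^+ N =
      (S%:R - 1) * delta + \sum_(S.+1 <= k < K.+1) P k /\
   (forall Q : nat -> R, (forall k, (1 <= k <= K)%N -> 0 <= Q k <= 1) ->
      \sum_(1 <= k < K.+1) Q k = 1 ->
      (S%:R - 1) * delta + \sum_(S.+1 <= k < K.+1) P k <=
      \sum_(1 <= k < K.+1) P k * (1 - Q k) ^+ N).
Proof.
move=> r N2 /andP[S1 SK] P0 Pmono P1 condS condS1 Pout.
have N1 : (N - 1)%:R != 0 :> R by rewrite pnatr_eq0 subn_eq0 -ltnNge.
have r0 : r != 0 by rewrite /r mul1r invr_eq0.
set A := fun k => P k `^ r.
have Apow : forall x : R, 0 <= x -> (x `^ r) ^+ (N - 1) = x.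
  move=> x x0; rewrite -powR_mulrn ?powR_ge0 // -powRrM /r mul1r mulVf //.
  exact: powRr1.
have Adiv : forall x y : R, 0 <= x -> 0 < y -> (x / y) `^ r = x `^ r / y `^ r.
  move=> x y x0 y0; rewrite powRM //; last by rewrite invr_ge0 ltW.
  have -> : y^-1 `^ r = (y `^ r)^-1.
    by rewrite -powR_inv1 ?(ltW y0) // -powRrM mulrC powRrM powR_inv1 ?powR_ge0.
  by [].
have PS0 : 0 < P S.
  case: (ltrP 0 (P S)) => // PSle.
  have PS : P S = 0 by apply/eqP; rewrite eq_le PSle P0.
  case: (leqP S 1) => [S1'|S2].
    have S1e : S = 1%N by apply/eqP; rewrite eqn_leq S1' S1.
    by move: P1; rewrite -S1e PS ltxx.
  move: condS; rewrite (eq_big_nat _ _ (F2 := fun _ => 1)); last first.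
    by move=> k _; rewrite PS mul0r powR0 // subr0.
  by rewrite sumr_const_nat ltrn1; move: S2; clear; lia.
have Ne : (N - 1).+1 = N by move: N2; clear; lia.
have Ppos : forall k, (1 <= k <= S)%N -> 0 < P k.
  by move=> k /andP[k1 kS]; apply: lt_le_trans PS0 (Pmono _ _ _); rewrite k1.
have Apos : forall k, (1 <= k <= S)%N -> 0 < A k.
  by move=> k hk; apply: powR_gt0; apply: Ppos.
set T := \sum_(1 <= k < S.+1) (A k)^-1.
have Tsplit : T = \sum_(1 <= k < S) (A k)^-1 + (A S)^-1 by rewrite /T big_nat_recr.
have T0 : 0 < T.
  have h1 : 0 < (A S)^-1 by rewrite invr_gt0 Apos // S1 leqnn.
  have h2 : 0 <= \sum_(1 <= k < S) (A k)^-1.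
    by apply: sumr_ge0 => k _; rewrite invr_ge0 powR_ge0.
  rewrite Tsplit; lra.
set c := (S%:R - 1) / T.
have cT : c * T = S%:R - 1 by rewrite /c divfK // gt_eqF.
have c0 : 0 <= c by rewrite /c divr_ge0 ?(ltW T0) // subr_ge0 ler1n.
set d := c ^+ (N - 1).
have d0 : 0 <= d by rewrite exprn_ge0.
have cA : c < A S.
  move: condS; rewrite (eq_big_nat _ _ (F2 := fun k => 1 - A S * (A k)^-1)); last first.
    move=> k /andP[k1 kS]; rewrite Adiv ?(ltW PS0) // Ppos // k1 ltnW //.
  rewrite sumrB sumr_const_nat -mulr_sumr natrB // => h.
  rewrite /c ltr_pdivrMr // Tsplit mulrDr mulfV ?gt_eqF ?Apos ?S1 ?leqnn //.
  lra.
have dPS : d < P S.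
  by rewrite -(Apow (P S)) ?P0 // /d ltrXn2r // subn_eq0 -ltnNge.
have dPS1 : P S.+1 <= d.
  case: (ltnP S K) => [SltK|KleS]; last by rewrite Pout // ltnS.
  have := condS1 SltK.
  rewrite (eq_big_nat _ _ (F2 := fun k => 1 - A S.+1 * (A k)^-1)); last first.
    by move=> k /andP[k1 kS]; rewrite Adiv ?P0 // Ppos // k1 -ltnS.
  rewrite sumrB sumr_const_nat -mulr_sumr subSS subn0 => /negP; rewrite -leNgt => h.
  have hA : A S.+1 <= c by rewrite /c ler_pdivlMr //; move: h; rewrite -/T; lra.
  rewrite -(Apow (P S.+1)) ?P0 // /d; apply: lerXn2r; rewrite ?nnegrE ?powR_ge0 //.
exists d; split => //; split => //.
set X := fun k => if (1 <= k <= S)%N then 1 - c / A k else 0.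
have Xact : forall k, (1 <= k <= S)%N -> 0 <= c / A k <= 1.
  move=> k hk; rewrite divr_ge0 ?(ltW (Apos _ hk)) //= ler_pdivrMr ?Apos // mul1r.
  rewrite -(ler_pXn2r (_ : (0 < N - 1)%N)) ?nnegrE ?powR_ge0 //; last by move: N2; clear; lia.
  rewrite Apow ?P0 //; apply: ltW; apply: lt_le_trans dPS _; apply: Pmono; by case/andP: hk => -> ->.
have X0 : forall k, 0 <= X k.
  move=> k; rewrite /X; case: ifP => hk //; have := Xact k hk; lra.
have Xsplit : forall F : nat -> R, \sum_(1 <= k < K.+1) F k =
   \sum_(1 <= k < S.+1) F k + \sum_(S.+1 <= k < K.+1) F k.
  by move=> F; rewrite (big_cat_nat _ (n := S.+1)).
have sumX : \sum_(1 <= k < K.+1) X k = 1.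
  rewrite Xsplit (eq_big_nat _ _ (F2 := fun k => 1 - c * (A k)^-1)); last first.
    by move=> k; rewrite ltnS => hk; rewrite /X hk.
  rewrite [X in _ + X](eq_big_nat _ _ (F2 := fun k => 0)); last first.
    by move=> k /andP[hk _]; rewrite /X (leqNgt k S) hk andbF.
  rewrite sumrB -mulr_sumr sumr_const_nat -/T cT big1 // addr0 subSS subn0; lra.
have LX : \sum_(1 <= k < K.+1) P k * (1 - X k) ^+ N =
      (S%:R - 1) * d + \sum_(S.+1 <= k < K.+1) P k.
  rewrite Xsplit (eq_big_nat _ _ (F2 := fun k => d * c * (A k)^-1)); last first.
    move=> k; rewrite ltnS => hk; rewrite /X hk opprB addrC subrK expr_div_n -Ne !exprSr Apow ?P0 //.
    rewrite /d; field; apply/andP; split; rewrite gt_eqF //; [apply: Apos | apply: Ppos];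
      by rewrite -ltnS.
  rewrite [X in _ + X](eq_big_nat _ _ (F2 := fun k => P k)); last first.
    by move=> k /andP[hk _]; rewrite /X (leqNgt k S) hk andbF subr0 expr1n mulr1.
  by rewrite -mulr_sumr -/T -mulrA cT mulrC.
exists X; split => //; split => //; split => //.
move=> Q Q01 sumQ.
have key : forall k, (1 <= k < K.+1)%N ->
   P k * (1 - X k) ^+ N + N%:R * d * (X k - Q k) <= P k * (1 - Q k) ^+ N.
  move=> k /andP[k1 kK]; rewrite ltnS in kK.
  have /andP[q0 q1] := Q01 k (introT andP (conj k1 kK)).
  have Xle1 : X k <= 1.
    rewrite /X; case: ifP => hk; last lra.
    by have := Xact k hk; lra.
  have a0 : 0 <= 1 - Q k by lra.
  have b0 : 0 <= 1 - X k by lra.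
  have := @tangent R (N - 1) _ _ a0 b0; rewrite Ne => h.
  have Pk0 := P0 k.
  have h2 := ler_wpM2l Pk0 h.
  have hN : 0 <= N%:R :> R by rewrite ler0n.
  suff : N%:R * d * (X k - Q k) <= P k * (N%:R * (1 - X k) ^+ (N - 1) * (1 - Q k - (1 - X k))).
    move: h2; rewrite mulrDr; lra.
  rewrite /X; case: ifP => hk.
    have e1 : 1 - (1 - c / A k) = c / A k by ring.
    rewrite e1 expr_div_n Apow ?P0 //.
    have e : P k * (c ^+ (N - 1) / P k) = d by rewrite /d mulrC divfK // gt_eqF // Ppos.
    have -> : P k * (N%:R * (c ^+ (N - 1) / P k) * (1 - Q k - c / A k)) =
       N%:R * (P k * (c ^+ (N - 1) / P k)) * (1 - c / A k - Q k) by ring.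
    by rewrite e.
  have hPd : P k <= d.
    have Sk : (S < k)%N by move: hk; rewrite k1 /= => /negbT; rewrite -ltnNge.
    by apply: le_trans dPS1; apply: Pmono; rewrite Sk.
  rewrite subr0 expr1n mulr1.
  have hq : 0 <= N%:R * Q k by rewrite mulr_ge0.
  nra.
apply: le_trans (ler_sum_nat key).
rewrite big_split /= LX -mulr_sumr sumrB sumX sumQ subrr mulr0 addr0 //.
Qed.

Theorem theorem4p2 (R : realType) (K N : nat) (p : 'I_K -> R) :
  (1 <= K)%N -> (2 <= N)%N ->
  in_simplex p ->
  (forall i j : 'I_K, (i <= j)%N -> p j <= p i) ->
  LN N p p = \sum_(k < K) p k * (1 - p k) ^+ N /\
  exists delta : R,
    pn p (KN N p).+1 <= delta /\ delta < pn p (KN N p) /\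
    (exists q0 : 'I_K -> R, in_simplex q0 /\
       LN N p q0 = ((KN N p)%:R - 1) * delta
                   + \sum_((KN N p).+1 <= k < K.+1) pn p k) /\
    (forall q : 'I_K -> R, in_simplex q ->
       ((KN N p)%:R - 1) * delta + \sum_((KN N p).+1 <= k < K.+1) pn p k
       <= LN N p q).
Proof.
move=> K1 N2 [pge0 psum] pmono; split => //.
have [SK condS condS1] := @KN_spec R K N p K1.
set S := KN N p in SK condS condS1 *.
have pnO : forall (f : 'I_K -> R) k (h : (k < K)%N), pn f k.+1 = f (Ordinal h).
  by move=> f k h; exact: (@pnS R K f (Ordinal h)).
have pn0 : forall (f : 'I_K -> R), (forall i, 0 <= f i) -> forall k, 0 <= pn f k.
  move=> f f0 [|k] //; case: (ltnP k K) => hk; first by rewrite pnO.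
  by rewrite (@pn_out R K f k.+1).
have P0 := pn0 p pge0.
have Pmono : forall j k, (1 <= j <= k)%N -> pn p k <= pn p j.
  move=> [|j] [|k] // jk; rewrite /= ltnS in jk.
  case: (ltnP k K) => hk; last by rewrite pn_out.
  have hj : (j < K)%N by apply: leq_ltn_trans hk.
  by rewrite (pnO _ _ hk) (pnO _ _ hj); apply: pmono.
have P1 : 0 < pn p 1%N.
  rewrite (pnO _ _ K1); rewrite lt_neqAle pge0 andbT; apply/negP => /eqP e.
  move: psum; rewrite big1 => [/eqP|i _]; first by rewrite eq_sym oner_eq0.
  apply/eqP; rewrite eq_le pge0 andbT e; apply: pmono => //.
have cS1 : (S < K)%N -> ~ (\sum_(1 <= k < S.+1) (1 - powR (pn p S.+1 / pn p k) (1 / (N - 1)%:R)) < 1).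
  move=> h h'; have := condS1 S.+1; rewrite ltnSn h => /(_ isT) /negP; apply.
  exact: h'.
have := @core R K N S (pn p) N2 SK P0 Pmono P1 condS cS1 (fun k hk => @pn_out R K p k hk).
move=> [d [d1 [d2 [X [X0 [sumX [LX low]]]]]]].
exists d; split => //; split => //.
have LNE : forall q : 'I_K -> R, LN N p q = \sum_(1 <= k < K.+1) pn p k * (1 - pn q k) ^+ N.
  move=> q; rewrite /LN -(@sum_ordS R K (fun k => pn p k * (1 - pn q k) ^+ N)).
  by apply: eq_bigr => i _; rewrite !pnS.
split.
  exists (fun i : 'I_K => X i.+1); split.
    split => //; by rewrite (@sum_ordS R K X).
  rewrite LNE -LX; apply: eq_big_nat => -[|k] // hk. rewrite /= ltnS in hk.
  by rewrite (pnO (fun i : 'I_K => X i.+1) _ hk).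
move=> q [qge0 qsum]; rewrite LNE; apply: low.
  move=> [|k] // hk; rewrite /= in hk; rewrite (pnO _ _ hk) qge0 /=.
  rewrite -qsum (bigD1 (Ordinal hk)) //= lerDl; exact: sumr_ge0.
by rewrite -(@sum_ordS R K (pn q)) -qsum; apply: eq_bigr => i _; rewrite pnS.
Qed.
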